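(* Let $k\geq0$ and let $w,\bar w\in W_n$ both be increasing up to $k$ and have the same $k$-truncated A-code, with $\ell(w)=\ell(\bar w)+1$. Suppose that $v(\bar w)=s_iv(w)$ for some simple reflection $s_i$, $i\geq0$. Then $\bar w=s_iw$.
   Context: $W_n$ is the group of signed permutations $w=(w_1,\ldots,w_n)$ of $\{1,\ldots,n\}$; $\ell(w)=\#\{i<j\mid w_i>w_j\}+\sum_{w_i<0}|w_i|$. Left multiplication: for $i\geq1$, $s_iw$ is obtained by interchanging the values $i$ and $i+1$ (and $-i$ and $-(i+1)$) in $w$; $s_0w$ changes the sign of the entry equal to $\pm1$. $w$ is increasing up to $k$ if $0<w_1<\cdots<w_k$ (vacuous for $k=0$). The A-code is $\gamma_i:=\#\{j>i\mid w_j<w_i\}$ and the $k$-truncated A-code is $(\gamma_{k+1},\ldots,\gamma_n)$. $v(w)$ is the element obtained from $w$ by rearranging the entries $w_{k+1},\ldots,w_n$ in increasing order. *)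

(* Defs.v *)
From mathcomp Require Import all_boot all_order all_algebra.
Set Implicit Arguments. Unset Strict Implicit. Unset Printing Implicit Defensive.
Import Order.TTheory GRing.Theory Num.Theory.
Local Open Scope ring_scope.

(* A signed permutation w = (w_1,...,w_n) of W_n is represented by the
   sequence [:: w_1; ...; w_n] of integers (0-indexed in Rocq). *)
Definition signed_perm (n : nat) (w : seq int) : bool :=
  (size w == n) && perm_eq (map absz w) (iota 1 n).

Definition slength (w : seq int) : nat :=
  (\sum_(0 <= i < size w) \sum_(i.+1 <= j < size w) ((nth 0%R w j < nth 0%R w i)%R : nat))%N
  + (\sum_(0 <= i < size w) (if (nth 0%R w i < 0)%R then absz (nth 0%R w i) else 0%N))%N.

(* Left multiplication by the simple reflection s_i:
   s_0 changes the sign of the entry equal to +-1; for i >= 1, s_i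
   interchanges the values i and i+1 (and -i and -(i+1)). *)
Definition sref (i : nat) (w : seq int) : seq int :=
  map (fun x : int =>
    if i == 0%N then (if absz x == 1%N then - x else x)
    else if absz x == i then (if x < 0 then - (i.+1)%:Z else (i.+1)%:Z)
    else if absz x == i.+1 then (if x < 0 then - i%:Z else i%:Z)
    else x) w.

Definition incr_upto (k : nat) (w : seq int) : bool :=
  all (fun x : int => 0 < x) (take k w) && sorted (fun x y : int => x < y) (take k w).

Definition Acode_entry (w : seq int) (i : nat) : nat :=
  (\sum_(i.+1 <= j < size w) ((nth 0%R w j < nth 0%R w i)%R : nat))%N.

Definition trunc_Acode (k : nat) (w : seq int) : seq nat :=
  map (Acode_entry w) (iota k (size w - k)).

Definition vrearr (k : nat) (w : seq int) : seq int :=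
  take k w ++ sort (fun x y : int => x <= y) (drop k w).

(* Main.v *)
Require Import Defs.
From mathcomp Require Import all_boot all_order all_algebra zify.
Import Order.TTheory GRing.Theory Num.Theory.
Local Open Scope ring_scope.
Definition fsr (i : nat) := (fun x : int =>
    if i == 0%N then (if absz x == 1%N then - x else x)
    else if absz x == i then (if x < 0 then - (i.+1)%:Z else (i.+1)%:Z)
    else if absz x == i.+1 then (if x < 0 then - i%:Z else i%:Z)
    else x).
Lemma srefE i w : sref i w = map (fsr i) w. Proof. by []. Qed.
Lemma fsrP i x y : x != 0 -> y != 0 -> x < y -> fsr i x < fsr i y \/ (fsr i x = y /\ fsr i y = x).
Proof.
rewrite /fsr => x0 y0 lt; repeat case: ifP => ? ; lia.
Qed.

Definition code (s : seq int) : seq nat := map (Acode_entry s) (iota 0 (size s)).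

Lemma sum_count (P : pred int) (s : seq int) : (\sum_(y <- s) (P y : nat))%N = count P s.
Proof. by elim: s => [|y s IH]; rewrite ?big_nil ?big_cons //= IH. Qed.

Lemma Acode0 x s : Acode_entry (x :: s) 0 = count (fun y => y < x) s.
Proof.
rewrite /Acode_entry big_add1 /= -sum_count [RHS](big_nth 0).
by [].
Qed.

Lemma AcodeS x s m : Acode_entry (x :: s) m.+1 = Acode_entry s m.
Proof. by rewrite /Acode_entry big_add1 /=. Qed.

Lemma code_cons x s : code (x :: s) = count (fun y => y < x) s :: code s.
Proof.
rewrite /code /= Acode0; congr cons.
rewrite -(addn0 1%N) iotaDl -map_comp; apply: eq_map => m /=.
by rewrite add1n AcodeS.
Qed.

Lemma Acode_drop k a m : Acode_entry a (k + m) = Acode_entry (drop k a) m.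
Proof.
elim: k a => [|k IH] a; first by rewrite drop0.
case: a => [|x a].
- by rewrite /Acode_entry /index_iota /= !big_nil.
- by rewrite /= AcodeS IH.
Qed.

Lemma trunc_code k a : trunc_Acode k a = code (drop k a).
Proof.
rewrite /trunc_Acode /code size_drop -{1}(addn0 k) iotaDl -map_comp.
by apply: eq_map => m /=; rewrite Acode_drop.
Qed.

Lemma code_map (f : int -> int) d :
  {in d &, forall x y, (f x < f y) = (x < y)} -> code (map f d) = code d.
Proof.
elim: d => [|x d IH] //= H.
rewrite !code_cons IH; last by move=> a b ha hb; apply: H; rewrite inE ?ha ?hb orbT.
congr cons; rewrite count_map; apply: eq_in_count => y hy /=.
by apply: H; rewrite inE ?hy ?eqxx ?orbT.
Qed.

Lemma core s t : perm_eq s t -> code s = code t -> s = t.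
Proof.
elim: s t => [|x s IH] [|y t] //.
all: try by move/perm_size.
rewrite !code_cons => pst [ec ecode].
have exy : x = y.
  have cx : count (fun z : int => (z < x)%R) (x :: s) = count (fun z : int => (z < x)%R) (y :: t) by apply/permP.
  have cy : count (fun z : int => (z < y)%R) (x :: s) = count (fun z : int => (z < y)%R) (y :: t) by apply/permP.
  move: cx cy => /=; rewrite !ltxx /=.
  case: (ltgtP x y) => // hxy.
  - have: (count (fun z : int => (z < x)%R) s <= count (fun z : int => (z < y)%R) s)%N.
      by apply: sub_count => z /= hz; apply: lt_trans hz hxy.
    lia.
  - have: (count (fun z : int => (z < y)%R) t <= count (fun z : int => (z < x)%R) t)%N.
      by apply: sub_count => z /= hz; apply: lt_trans hz hxy.
    lia.
subst y; congr cons; apply: IH => //.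
by rewrite perm_cons in pst.
Qed.

Lemma mono (f : int -> int) (s : seq int) :
  (forall x y, x != 0 -> y != 0 -> x < y -> f x < f y \/ (f x = y /\ f y = x)) ->
  all (fun x => x != 0) s ->
  sorted (fun x y : int => x <= y) s -> sorted (fun x y : int => x <= y) (map f s) ->
  {in s &, forall x y, (f x < f y) = (x < y)}.
Proof.
move=> fP.
elim: s => [|x s IH] //= /andP[x0 a0] ps pfs.
have as1 := order_path_min le_trans ps.
have afs : all (fun z => f x <= z) (map f s) := order_path_min le_trans pfs.
rewrite all_map in afs.
have key : forall b, b \in s -> (f x < f b) = (x < b) /\ (f b < f x) = (b < x).
  move=> b hb.
  have xb : x <= b := allP as1 b hb.
  have fxb : f x <= f b := allP afs b hb.
  have b0 : b != 0 := allP a0 b hb.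
  move: xb; rewrite le_eqVlt => /orP[/eqP <-|hxb]; first by rewrite !ltxx.
  case: (fP x b x0 b0 hxb) => [h|[h1 h2]].
  - by rewrite h hxb; split => //; rewrite !ltNge (ltW h) (ltW hxb).
  - move: fxb; rewrite h1 h2 => /(le_lt_trans)/(_ hxb); rewrite ltxx //.
move=> a b; rewrite !inE => /orP[/eqP->|ha] /orP[/eqP->|hb].
- by rewrite !ltxx.
- by case: (key b hb).
- by case: (key a ha).
- by apply: IH => //; apply: (path_sorted ps) || apply: (path_sorted pfs).
Qed.

Theorem lemma10 (n k : nat) (w wb : seq int) (i : nat) :
  signed_perm n w -> signed_perm n wb ->
  incr_upto k w -> incr_upto k wb ->
  trunc_Acode k w = trunc_Acode k wb ->
  slength w = (slength wb).+1 ->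
  (i < n)%N ->
  vrearr k wb = sref i (vrearr k w) ->
  wb = sref i w.
Proof.
move=> /andP[/eqP sw pw] /andP[/eqP swb _] _ _ hcode _ _ hv.
have nz : all (fun x : int => x != 0) w.
  apply/allP => x hx.
  have : (absz x \in iota 1 n) by rewrite -(perm_mem pw) map_f.
  by rewrite mem_iota; apply: contraTneq => ->.
rewrite srefE in hv *.
move: hv; rewrite /vrearr srefE map_cat => /eqP; rewrite eqseq_cat; last first.
  by rewrite size_map !size_take sw swb.
case/andP => /eqP ht /eqP hs.
set d := drop k w.
have srt : sorted (fun x y : int => x <= y) (map (fsr i) (sort (fun x y : int => x <= y) d)).
  by rewrite -hs; apply: sort_sorted; exact: le_total.
have nzd : all (fun x : int => x != 0) (sort (fun x y : int => x <= y) d).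
  by apply/allP => x; rewrite mem_sort => /mem_drop hx; apply: (allP nz).
have hm := @mono (fsr i) _ (@fsrP i) nzd (sort_sorted le_total _) srt.
have hm' : {in d &, forall x y, (fsr i x < fsr i y) = (x < y)}.
  by move=> a b ha hb; apply: hm; rewrite mem_sort.
have p1 : perm_eq (sort (fun x y : int => x <= y) d) d by rewrite perm_sort perm_refl.
have pe : perm_eq (drop k wb) (drop k (map (fsr i) w)).
  rewrite -map_drop -/d.
  apply: perm_trans (perm_map _ p1).
  by rewrite -hs perm_sym perm_sort perm_refl.
have dc : drop k wb = drop k (map (fsr i) w).
  apply: core pe _.
  by rewrite -!trunc_code -hcode !trunc_code -map_drop -/d code_map.
by rewrite -(cat_take_drop k wb) -(cat_take_drop k (map (fsr i) w)) ht dc map_take.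
Qed.
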